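(* Let $\rho$ be a $d$-dimensional state with $\Delta(\rho)>0$. Then \[ l(\rho)=\max_{i\in[d]}\big|\{j\in[d]:\ |R^\rho_{ij}|=1\}\big| . \]
   Context: Fixed computational basis; $\Delta$ the dephasing map; $\Pi_I=\sum_{i\in I}|i\rangle\langle i|$; $R^\rho=\Delta(\rho)^{-1/2}\rho\Delta(\rho)^{-1/2}$. $l(\rho)=\max\{\mathrm{rk}(\Pi_I\Delta(\rho)\Pi_I):\ I\subseteq[d],\ \mathrm{rk}(\Pi_I\rho\Pi_I)=1\}$. *)

(* Defs.v *)
(* matrices over a numeric algebraically closed field C
   (e.g. algC, or complex R for R : rcfType). *)
From HB Require Import structures.
From mathcomp Require Import all_boot all_order all_algebra.
Set Implicit Arguments. Unset Strict Implicit. Unset Printing Implicit Defensive.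
Import Order.TTheory GRing.Theory Num.Theory.
Local Open Scope ring_scope.

Section Defs.
Variable C : numClosedFieldType.
Variable d : nat.

Definition adjmx m n (A : 'M[C]_(m, n)) : 'M[C]_(n, m) := map_mx Num.conj A^T.

Definition psd (A : 'M[C]_d) : Prop :=
  adjmx A = A /\ forall v : 'cV[C]_d, 0 <= (adjmx v *m A *m v) 0 0.

Definition is_state (rho : 'M[C]_d) : Prop := psd rho /\ \tr rho = 1.

Definition dephase (A : 'M[C]_d) : 'M[C]_d := diag_mx (\row_i A i i).

(* Delta(rho) > 0 : positive definite diagonal, i.e. all diagonal entries > 0 *)
Definition dephase_pos (A : 'M[C]_d) : Prop := forall i, 0 < A i i.

Definition dephase_invsqrt (A : 'M[C]_d) : 'M[C]_d :=
  diag_mx (\row_i (sqrtC (A i i))^-1).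

Definition Rmat (A : 'M[C]_d) : 'M[C]_d :=
  dephase_invsqrt A *m A *m dephase_invsqrt A.

Definition proj (I : {set 'I_d}) : 'M[C]_d :=
  diag_mx (\row_i (if i \in I then 1 else 0)).

Definition lfun (A : 'M[C]_d) : nat :=
  \max_(I : {set 'I_d} | \rank (proj I *m A *m proj I) == 1%N)
     \rank (proj I *m dephase A *m proj I).

End Defs.

(* Main.v *)
Require Import Defs.
From HB Require Import structures.
From mathcomp Require Import all_boot all_order all_algebra.
From mathcomp Require Import ring lra.
Set Implicit Arguments. Unset Strict Implicit. Unset Printing Implicit Defensive.
Import Order.TTheory GRing.Theory Num.Theory.
Local Open Scope ring_scope.

Section S.
Variable C : numClosedFieldType.
Variable d : nat.
Implicit Types A : 'M[C]_d.

Lemma adjmxE m n (M : 'M[C]_(m,n)) i j : adjmx M i j = (M j i)^*.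
Proof. by rewrite /adjmx !mxE. Qed.

Lemma adjmxD m n (M N : 'M[C]_(m,n)) : adjmx (M + N) = adjmx M + adjmx N.
Proof. by apply/matrixP=> i j; rewrite !(mxE, adjmxE) rmorphD. Qed.

Lemma adjmxZ m n t (M : 'M[C]_(m,n)) : adjmx (t *: M) = t^* *: adjmx M.
Proof. by apply/matrixP=> i j; rewrite !(mxE, adjmxE) rmorphM. Qed.

Lemma adjmxN m n (M : 'M[C]_(m,n)) : adjmx (- M) = - adjmx M.
Proof. by apply/matrixP=> i j; rewrite !(mxE, adjmxE) rmorphN. Qed.

Lemma adjmxM m n p (M : 'M[C]_(m,n)) (N : 'M[C]_(n,p)) :
  adjmx (M *m N) = adjmx N *m adjmx M.
Proof.
apply/matrixP=> i j; rewrite !(mxE, adjmxE) rmorph_sum; apply: eq_bigr => k _.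
by rewrite !adjmxE rmorphM mulrC.
Qed.

Lemma adjmxK m n (M : 'M[C]_(m,n)) : adjmx (adjmx M) = M.
Proof. by apply/matrixP=> i j; rewrite !adjmxE conjCK. Qed.

Lemma adjmx_delta (a : 'I_d) : adjmx (delta_mx a 0 : 'cV[C]_d) = delta_mx 0 a.
Proof.
apply/matrixP=> i j; rewrite adjmxE !mxE.
by case: (j == a); case: (i == 0); rewrite /= ?rmorph1 ?rmorph0 // andbC.
Qed.

Definition B A (x y : 'cV[C]_d) := (adjmx x *m A *m y) 0 0.

Lemma BDl A x y z : B A (x + y) z = B A x z + B A y z.
Proof. by rewrite /B adjmxD !mulmxDl mxE. Qed.
Lemma BDr A x y z : B A z (x + y) = B A z x + B A z y.
Proof. by rewrite /B !mulmxDr mxE. Qed.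
Lemma BZl A t x y : B A (t *: x) y = t^* * B A x y.
Proof. by rewrite /B adjmxZ -!scalemxAl mxE. Qed.
Lemma BZr A t x y : B A x (t *: y) = t * B A x y.
Proof. by rewrite /B -!scalemxAr mxE. Qed.
Lemma BNl A x y : B A (- x) y = - B A x y.
Proof. by rewrite -scaleN1r BZl rmorphN1 mulN1r. Qed.
Lemma BNr A x y : B A x (- y) = - B A x y.
Proof. by rewrite -scaleN1r BZr mulN1r. Qed.
Lemma Bel A a y : B A (delta_mx a 0) y = (A *m y) a 0.
Proof. by rewrite /B adjmx_delta -mulmxA -rowE mxE. Qed.
Lemma Bee A a b : B A (delta_mx a 0) (delta_mx b 0) = A a b.
Proof. by rewrite Bel -colE mxE. Qed.
Lemma Bconj A x y : adjmx A = A -> B A y x = (B A x y)^*.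
Proof.
move=> hA; rewrite /B -adjmxE !adjmxM adjmxK hA.
by rewrite mulmxA.
Qed.

Lemma psd_kernel A w : psd A -> B A w w = 0 -> forall k, (A *m w) k 0 = 0.
Proof.
move=> [hH hP] hw k.
set x := (A *m w) k 0.
set a := A k k.
have ha : 0 <= a by have := hP (delta_mx k 0); rewrite -/(B A _ _) Bee.
have ha1 : 0 < a + 1 by rewrite ltr_wpDl.
have ha2 : 0 < a + 2 by rewrite ltr_wpDl.
set t := - x / (a + 1).
have := hP (w + t *: delta_mx k 0); rewrite -/(B A _ _).
rewrite !(BDl, BDr, BZl, BZr) hw Bee Bel -/x -/a (Bconj _ _ hH) Bel -/x.
have -> : t^* = - x^* / (a + 1).
  rewrite /t rmorphM rmorphN fmorphV rmorphD rmorph1; congr (- _ / (_ + 1)); exact: geC0_conj.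
rewrite /t.
have -> : 0 + - x / (a + 1) * x^* + (- x^* / (a + 1) * x + - x^* / (a + 1) * (- x / (a + 1) * a))
   = - ((x * x^*) * ((a + 2) / (a+1)^+2)).
  by field; rewrite lt0r_neq0.
rewrite -normCK oppr_ge0 pmulr_lle0; last by rewrite divr_gt0 // exprn_gt0.
by move=> h; apply/eqP; rewrite -normr_eq0 -(sqrf_eq0 `|x|) eq_le h exprn_ge0 ?normr_ge0.
Qed.
Lemma proj_mulE (I : {set 'I_d}) (X : 'M[C]_d) i j :
  (proj C I *m X *m proj C I) i j =
  (if i \in I then 1 else 0) * X i j * (if j \in I then 1 else 0).
Proof. by rewrite /proj mul_mx_diag mul_diag_mx !mxE. Qed.

Lemma rank_le1_fact (M : 'M[C]_d) : (\rank M <= 1)%N ->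
  exists (u : 'cV[C]_d) (v : 'rV[C]_d), M = u *m v.
Proof.
case: d M => [|n] M hr.
  by exists 0, 0; apply/matrixP => [[]].
have := mulmx_ebase M.
move: hr; rewrite leq_eqVlt ltnS leqn0 => /orP[/eqP hr|].
  have -> : pid_mx (\rank M) = (delta_mx 0 0 : 'cV[C]_n.+1) *m (delta_mx 0 0 : 'rV[C]_n.+1).
    rewrite mul_delta_mx hr; apply/matrixP => a b; rewrite !mxE.
    rewrite -[a == 0]val_eqE -[b == 0]val_eqE /=; case: a b => [[|a] ?] [[|b] ?] //=; by rewrite andbF.
  move=> <-; exists (col_ebase M *m delta_mx 0 0), (delta_mx 0 0 *m row_ebase M).
  by rewrite !mulmxA.
rewrite mxrank_eq0 => /eqP -> _; by exists 0, 0; rewrite mul0mx.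
Qed.

Lemma rank1_minor (M : 'M[C]_d) i j : (\rank M <= 1)%N ->
  M i i * M j j = M i j * M j i.
Proof.
move/rank_le1_fact => [u [v ->]].
rewrite !mxE !big_ord1; ring.
Qed.

Lemma herm_conj A i j : adjmx A = A -> (A i j)^* = A j i.
Proof. by move=> h; rewrite -adjmxE h. Qed.

Lemma classA A (I : {set 'I_d}) i j : \rank (proj C I *m A *m proj C I) == 1%N ->
  i \in I -> j \in I -> A i j * A j i = A i i * A j j.
Proof.
move=> /eqP h hi hj; have := @rank1_minor _ i j (eq_leq h).
by rewrite !proj_mulE hi hj !mulr1 !mul1r => ->.
Qed.

Lemma classB A i : psd A -> (forall k, 0 < A k k) ->
  \rank (proj C [set j | A i j * A j i == A i i * A j j] *m A
          *m proj C [set j | A i j * A j i == A i i * A j j]) == 1%N.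
Proof.
move=> hA hpos; set S := [set j | _].
have hii : A i i != 0 by rewrite lt0r_neq0.
have col : forall j, j \in S -> forall k, A k j = (A i j / A i i) * A k i.
  move=> j; rewrite inE => /eqP hj k.
  set c := A i j / A i i.
  have hw : B A (delta_mx j 0 - c *: delta_mx i 0) (delta_mx j 0 - c *: delta_mx i 0) = 0.
    rewrite !(BDl, BDr, BNl, BNr, BZl, BZr, Bee).
    have -> : c^* = A j i / A i i.
      rewrite /c -(herm_conj i j hA.1) -{2}(geC0_conj (ltW (hpos i))).
      exact: fmorph_div.
    have hjj : A j j = A i j * A j i / A i i by rewrite hj [A i i * _]mulrC mulfK.
    by rewrite hjj /c; field.
  have := psd_kernel hA hw k.
  rewrite mulmxBr -scalemxAr -!colE !mxE => /eqP; rewrite subr_eq0 => /eqP.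
  by [].
have hiS : i \in S by rewrite inE.
set u : 'cV[C]_d := \col_k (if k \in S then A k i else 0).
set v : 'rV[C]_d := \row_j (if j \in S then A i j / A i i else 0).
have -> : proj C S *m A *m proj C S = u *m v.
  apply/matrixP => k j; rewrite proj_mulE !mxE big_ord1 !mxE.
  case: (k \in S); case hjS: (j \in S); rewrite ?(mul0r, mulr0, mul1r, mulr1) //.
  by rewrite (col j hjS) mulrC.
rewrite eqn_leq; apply/andP; split.
  by apply: leq_trans (mxrankM_maxl _ _) (rank_leq_col _).
rewrite lt0n mxrank_eq0; apply/eqP => /matrixP /(_ i i).
rewrite !mxE big_ord1 !mxE hiS mulrC divfK //; exact/eqP.
Qed.
Lemma rank_diag_part A (I : {set 'I_d}) : (forall k, 0 < A k k) ->
  \rank (proj C I *m dephase A *m proj C I) = #|I|.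
Proof.
move=> hpos.
set P : 'M[C]_(#|I|, d) := \matrix_(a, k) ((k == enum_val a)%:R).
have PPt : P *m P^T = 1%:M.
  apply/matrixP => a b; rewrite !mxE (bigD1 (enum_val a)) //= big1.
    by rewrite !mxE eqxx mul1r addr0 (inj_eq enum_val_inj) eq_sym.
  by move=> k hk; rewrite !mxE (negbTE hk) mul0r.
have PtP : P^T *m P = proj C I.
  apply/matrixP => k l; rewrite !mxE.
  case: (boolP (k \in I)) => kI.
    rewrite (bigD1 (enum_rank_in kI k)) //= big1.
      by rewrite !mxE enum_rankK_in // eqxx mul1r addr0 eq_sym.
    move=> a ha; rewrite !mxE; case: eqP => [hk|]; last by rewrite mul0r.
    by case/eqP: ha; apply: enum_val_inj; rewrite enum_rankK_in.
  rewrite mul0rn big1 // => a _; rewrite !mxE; case: eqP => [hk|]; last by rewrite mul0r.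
  by move: kI; rewrite hk enum_valP.
set M := proj C I *m dephase A *m proj C I.
apply/eqP; rewrite eqn_leq; apply/andP; split.
  have -> : M = (P^T *m P *m dephase A *m P^T) *m P by rewrite /M -PtP !mulmxA.
  exact: leq_trans (mxrankM_maxr _ _) (rank_leq_row _).
have hPM : P *m M *m P^T = diag_mx (\row_a A (enum_val a) (enum_val a)).
  rewrite /M -PtP !mulmxA PPt mul1mx -!mulmxA PPt mulmx1 mulmxA.
  apply/matrixP => a b; rewrite /dephase mul_mx_diag !mxE.
  rewrite (bigD1 (enum_val a)) //= big1.
    by rewrite !mxE eqxx mul1r addr0 (inj_eq enum_val_inj) eq_sym mulrnAr mulr1.
  by move=> k hk; rewrite !mxE (negbTE hk) !mul0r.
have hu : P *m M *m P^T \in unitmx.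
  rewrite hPM unitmxE det_diag unitfE; apply/prodf_neq0 => a _.
  by rewrite mxE lt0r_neq0.
rewrite -{1}(mxrank_unit hu).
exact: leq_trans (mxrankM_maxl _ _) (mxrankM_maxr _ _).
Qed.

Lemma Rmat_norm1 A i j : psd A -> (forall k, 0 < A k k) ->
  (`|Rmat A i j| == 1) = (A i j * A j i == A i i * A j j).
Proof.
move=> hA hpos.
have si : 0 < sqrtC (A i i) by rewrite sqrtC_gt0.
have sj : 0 < sqrtC (A j j) by rewrite sqrtC_gt0.
have -> : Rmat A i j = A i j / (sqrtC (A i i) * sqrtC (A j j)).
  by rewrite /Rmat /dephase_invsqrt mul_mx_diag mul_diag_mx !mxE invfM; ring.
rewrite normrM normfV normrM (gtr0_norm si) (gtr0_norm sj).
have hs : sqrtC (A i i) * sqrtC (A j j) != 0 by rewrite mulf_neq0 // lt0r_neq0.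
have -> : (`|A i j| / (sqrtC (A i i) * sqrtC (A j j)) == 1) =
          (`|A i j| == sqrtC (A i i) * sqrtC (A j j)).
  apply/eqP/eqP => [h|->]; last by rewrite divff.
  by rewrite -(divfK hs `|A i j|) h mul1r.
rewrite -(@eqrXn2 _ 2) // ?mulr_ge0 ?ltW //.
by rewrite exprMn !sqrtCK normCK (herm_conj i j hA.1).
Qed.

End S.

Theorem lemma5 (C : numClosedFieldType) (d : nat) (rho : 'M[C]_d) :
  is_state rho -> dephase_pos rho ->
  lfun rho = (\max_(i < d) #|[set j : 'I_d | (`|Rmat rho i j| == 1)%R]|)%N.
Proof.
move=> [hA _] hpos.
have hS : forall i, [set j : 'I_d | `|Rmat rho i j| == 1] =
                    [set j | rho i j * rho j i == rho i i * rho j j].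
  by move=> i; apply/setP => j; rewrite !inE Rmat_norm1.
rewrite /lfun; under eq_bigr => I _ do rewrite rank_diag_part //.
apply/eqP; rewrite eqn_leq; apply/andP; split.
  apply/bigmax_leqP => I hI.
  case: (set_0Vmem I) => [->|[i0 hi0]]; first by rewrite cards0.
  apply: leq_trans (leq_bigmax i0); rewrite hS; apply: subset_leq_card.
  apply/subsetP => j hj; rewrite inE; apply/eqP; exact: classA hI hi0 hj.
apply/bigmax_leqP => i _; rewrite hS.
apply: leq_bigmax_cond; exact: (classB i hA hpos).
Qed.
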